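(* Let $d\ge2$, $n\ge1$, let $\gamma$ be a positive conductivity on the lattice graph below, and let $t$ be an integer with $d-1\le t\le dn-1$. Then $T^{(t)}=T_2^{(t)}\circ T_1^{(t)}$, where $T^{(t)},T_1^{(t)},T_2^{(t)}$ are the operators defined in the context.
   Context: Lattice: $D=\{x\in\mathbb Z^d:1\le x_i\le n\ \forall i\}$, $\partial D=\{p\in\mathbb Z^d:\min_{q\in D}\|q-p\|_{\ell^1}=1\}$; $E$ = unordered pairs $pq\subseteq D\cup\partial D$ with $\|p-q\|_{\ell^1}=1$, not both in $\partial D$; $\mathcal N(p)=\{q:pq\in E\}$; each $b\in\partial D$ has a unique neighbour $q_b\in D$. Conductivity $\gamma:E\to(0,\infty)$, symmetric. $(\Delta_\gamma\mathbf u)_p=\sum_{q\in\mathcal N(p)}\gamma_{pq}(\mathbf u_q-\mathbf u_p)$. $S_\gamma\varphi$ is the unique $\mathbf u\in\mathbb R^{D\cup\partial D}$ with $\Delta_\gamma \mathbf u=0$ on $D$, $\mathbf u=\varphi$ on $\partial D$; $(D_\gamma\mathbf u)_b=\gamma_{bq_b}(\mathbf u_{q_b}-\mathbf u_b)$ for $b\in\partial D$; $\Lambda_\gamma=D_\gamma\circ S_\gamma$. Functions on a subset are extended by zero. For $x\in\mathbb Z^d$ let $s(x)=\sum_i x_i$. Define $L_t=\{x\in D:s(x)=t\}$, $L_t^{\mathcal S}=\{x\in D:s(x)\le t\}$, $K_t=\{x\in\partial D:s(x)=t\}$, $K_t^+=\{x\in K_t:\max_i x_i=n+1\}$, $K_t^-=\{x\in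 K_t:\min_i x_i=0\}$, $K_t^{\mathcal S\pm}=\bigcup_{\ell\le t}K_\ell^\pm$, $J_t^{\mathcal S}=K_t^{\mathcal S-}\cup K_{t+1}^{\mathcal S+}$. Operators: $T^{(t)}:\mathbb R^{J_t^{\mathcal S}}\to\mathbb R^{\partial D\setminus J_t^{\mathcal S}}$, $\varphi\mapsto(\Lambda_\gamma\varphi)|_{\partial D\setminus J_t^{\mathcal S}}$; $T_1^{(t)}:\mathbb R^{J_t^{\mathcal S}}\to\mathbb R^{L_{t+1}}$, $\varphi\mapsto(S_\gamma\varphi)|_{L_{t+1}}$. $T_2^{(t)}:\mathbb R^{L_{t+1}}\to\mathbb R^{\partial D\setminus J_t^{\mathcal S}}$ is the Dirichlet-to-Neumann map of the upper part: for $\mathbf y\in\mathbb R^{L_{t+1}}$ let $\mathbf w$ be the unique function on $(D\setminus L_t^{\mathcal S})\cup(\partial D\setminus J_t^{\mathcal S})$ with $\mathbf w=\mathbf y$ on $L_{t+1}$, $\mathbf w=0$ on $\partial D\setminus J_t^{\mathcal S}$ and $(\Delta_\gamma\mathbf w)_p=0$ for all $p\in D\setminus L_{t+1}^{\mathcal S}$; then $(T_2^{(t)}\mathbf y)_b=\gamma_{bq_b}(\mathbf w_{q_b}-\mathbf w_b)$ for $b\in\partial D\setminus J_t^{\mathcal S}$. *)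

(* Defs.v *)
From HB Require Import structures.
From mathcomp Require Import all_boot all_order all_algebra.
From Stdlib Require ClassicalEpsilon.
Set Implicit Arguments. Unset Strict Implicit. Unset Printing Implicit Defensive.
Import Order.TTheory GRing.Theory Num.Theory.
Local Open Scope ring_scope.

Definition pt (d : nat) := {ffun 'I_d -> int}.

Section Lattice.
Variables (R : realFieldType) (d n : nat).
Implicit Types (p q b x : pt d) (u : pt d -> R).

Definition l1 p q : nat := (\sum_(i < d) `|p i - q i|)%N.

Definition ssum x : int := \sum_(i < d) x i.

Definition shift p (i : 'I_d) (s : bool) : pt d :=
  [ffun j => if j == i then p j + (if s then 1 else -1) else p j].

Definition inD p : bool := [forall i, (1 <= p i) && (p i <= n%:Z)].

(* boundary: min_{q in D} |q-p|_1 = 1, i.e. p notin D and some point of D at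
   l^1-distance 1 (the points at l^1-distance 1 from p are exactly p +/- e_i) *)
Definition inBD p : bool :=
  ~~ inD p && [exists i : 'I_d, exists s : bool, inD (shift p i s)].

Definition inDbar p : bool := inD p || inBD p.

Definition edge p q : bool :=
  [&& inDbar p, inDbar q, ~~ (inBD p && inBD q) & l1 p q == 1%N].

Definition nbrs p : seq (pt d) :=
  [seq q <- [seq shift p i s | i <- enum 'I_d, s <- [:: true; false]] | edge p q].

(* the unique neighbour q_b in D of a boundary point b *)
Definition qb b : pt d := head b [seq q <- nbrs b | inD q].

Variable gamma : pt d -> pt d -> R.

Definition lap u p : R := \sum_(q <- nbrs p) gamma p q * (u q - u p).

Definition Dgam u b : R := gamma b (qb b) * (u (qb b) - u b).

Definition restr (A : pred (pt d)) u : pt d -> R :=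
  fun p => if A p then u p else 0.

Definition S_spec (phi : pt d -> R) u : Prop :=
  [/\ forall p, inD p -> lap u p = 0,
      forall b, inBD b -> u b = phi b
    & forall p, ~~ inDbar p -> u p = 0].

Definition Sgam (phi : pt d -> R) : pt d -> R :=
  ClassicalEpsilon.epsilon (inhabits (fun _ => 0)) (S_spec phi).

Definition Lam (phi : pt d -> R) : pt d -> R :=
  restr inBD (Dgam (Sgam (restr inBD phi))).

Definition min_is x (v : int) : bool :=
  [exists i, x i == v] && [forall i, v <= x i].
Definition max_is x (v : int) : bool :=
  [exists i, x i == v] && [forall i, x i <= v].

Variable t : int.

Definition inL1 p : bool := inD p && (ssum p == t + 1).
Definition inJ b : bool :=
  inBD b && ((min_is b 0 && (ssum b <= t))
             || (max_is b (n%:Z + 1) && (ssum b <= t + 1))).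
Definition inBDJc b : bool := inBD b && ~~ inJ b.

Definition Top (phi : pt d -> R) : pt d -> R :=
  restr inBDJc (Lam (restr inJ phi)).

Definition T1 (phi : pt d -> R) : pt d -> R :=
  restr inL1 (Sgam (restr inJ phi)).

Definition inUp p : bool := (inD p && (t < ssum p)) || inBDJc p.

Definition T2_spec (y : pt d -> R) (w : pt d -> R) : Prop :=
  [/\ forall p, inL1 p -> w p = y p,
      forall b, inBDJc b -> w b = 0,
      forall p, inD p -> t + 1 < ssum p -> lap w p = 0
    & forall p, ~~ inUp p -> w p = 0].

Definition T2 (y : pt d -> R) : pt d -> R :=
  restr inBDJc
    (Dgam (ClassicalEpsilon.epsilon (inhabits (fun _ => 0))
             (T2_spec (restr inL1 y)))).

End Lattice.

(* Main.v *)
Require Import Defs.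
From HB Require Import structures.
From mathcomp Require Import all_boot all_order all_algebra.
From mathcomp Require Import zify ring lra.
From Stdlib Require Import FunctionalExtensionality.
Set Implicit Arguments. Unset Strict Implicit. Unset Printing Implicit Defensive.
Import Order.TTheory GRing.Theory Num.Theory.
Local Open Scope ring_scope.

Section S.
Variables (R : realFieldType) (d n : nat).

Lemma shiftE (p : pt d) i s j :
  shift p i s j = if j == i then p j + (if s then 1 else -1) else p j.
Proof. by rewrite /shift ffunE. Qed.

Lemma shiftK (p : pt d) i s : shift (shift p i s) i (~~ s) = p.
Proof.
apply/ffunP => j; rewrite !shiftE; case: eqP => // ->; case: s => /=; ring.
Qed.

Lemma ssum_shift (p : pt d) i s :
  ssum (shift p i s) = ssum p + (if s then 1 else -1).
Proof.
rewrite /ssum (bigD1 i) //= [in RHS](bigD1 i) //= shiftE eqxx.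
rewrite (eq_bigr (fun j => p j)); last by move=> j /negbTE ji; rewrite shiftE ji.
ring.
Qed.

Lemma inDP (p : pt d) : reflect (forall i, 1 <= p i <= n%:Z) (inD n p).
Proof. exact: forallP. Qed.

Lemma l1_shift (p : pt d) i s : l1 p (shift p i s) = 1%N.
Proof.
rewrite /l1 (bigD1 i) //= shiftE eqxx big1 => [|j /negbTE ji]; last first.
  by rewrite shiftE ji subrr.
by case: s => /=; rewrite ?opprD addrA subrr.
Qed.

Lemma inBD_shift (p : pt d) i s : inD n p -> ~~ inD n (shift p i s) ->
  inBD n (shift p i s).
Proof.
move=> Dp nD; rewrite /inBD nD /=; apply/existsP; exists i; apply/existsP.
by exists (~~ s); rewrite shiftK.
Qed.

Lemma edge_shift (p : pt d) i s : inD n p -> edge n p (shift p i s).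
Proof.
move=> Dp; rewrite /edge /inDbar Dp /= l1_shift eqxx andbT.
have nB : ~~ inBD n p by rewrite /inBD Dp.
rewrite (negbTE nB) /= andbT.
case: (boolP (inD n (shift p i s))) => // nD; exact: inBD_shift.
Qed.

Lemma in_nbrs (p q : pt d) : q \in nbrs n p ->
  edge n p q /\ exists i s, q = shift p i s.
Proof.
rewrite mem_filter => /andP[e] /allpairsPdep [i [s [_ _ Eq]]]; subst q.
by split => //; exists i, s.
Qed.

Lemma nbrs_shift' (p : pt d) i s : edge n p (shift p i s) -> shift p i s \in nbrs n p.
Proof.
move=> e; rewrite mem_filter e /=.
apply/flattenP; exists [:: shift p i true; shift p i false].
  by apply/mapP; exists i; rewrite ?mem_enum.
by clear e; case: s; rewrite !inE eqxx ?orbT.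
Qed.

Lemma nbrs_shift (p : pt d) i s : inD n p -> shift p i s \in nbrs n p.
Proof. by move=> Dp; apply: nbrs_shift'; apply: edge_shift. Qed.


Definition Dseq : seq (pt d) :=
  [seq p <- [seq [ffun i => ((f i : nat)%:Z)] | f : {ffun 'I_d -> 'I_n.+1} <- enum {ffun 'I_d -> 'I_n.+1}]
   | inD n p].

Lemma Dseq_uniq : uniq Dseq.
Proof.
rewrite filter_uniq // map_inj_uniq ?enum_uniq // => f g /ffunP E.
apply/ffunP => i; apply: val_inj; move: (E i); rewrite !ffunE /=.
by case.
Qed.

Lemma mem_Dseq p : (p \in Dseq) = inD n p.
Proof.
rewrite mem_filter; case Dp: (inD n p) => //=.
apply/mapP; exists [ffun i => inord `|p i|%N]; first by rewrite mem_enum.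
apply/ffunP => i; rewrite !ffunE inordK; move/inDP: Dp => /(_ i) /andP[h1 h2].
  by rewrite gez0_abs //; apply: le_trans h1.
by rewrite ltnS -lez_nat gez0_abs //; apply: le_trans h1.
Qed.

Lemma seq_argmax (T : eqType) (F : realDomainType) (s : seq T) (f : T -> F) :
  s != [::] -> exists2 x, x \in s & forall y, y \in s -> f y <= f x.
Proof.
elim: s => // a s IH _; case: (altP (s =P [::])) => [->|ns].
  by exists a; rewrite ?inE // => y; rewrite inE => /eqP ->.
have [x xs Hx] := IH ns.
case: (leP (f a) (f x)) => fax.
  exists x; first by rewrite inE xs orbT.
  by move=> y; rewrite inE => /orP[/eqP ->|/Hx].
exists a; first by rewrite inE eqxx.
move=> y; rewrite inE => /orP[/eqP ->//|/Hx h]; exact: le_trans h (ltW fax).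
Qed.

Variable gamma : pt d -> pt d -> R.

Lemma lapD u v p : lap n gamma (fun x => u x + v x) p =
  lap n gamma u p + lap n gamma v p.
Proof. rewrite /lap -big_split /=; apply: eq_bigr => q _; ring. Qed.

Lemma lapN u p : lap n gamma (fun x => - u x) p = - lap n gamma u p.
Proof. rewrite /lap -sumrN; apply: eq_bigr => q _; ring. Qed.

Lemma lapB u v p : lap n gamma (fun x => u x - v x) p =
  lap n gamma u p - lap n gamma v p.
Proof. rewrite /lap -sumrB /=; apply: eq_bigr => q _; ring. Qed.

Lemma lap_sum k (c : 'I_k -> R) (h : 'I_k -> pt d -> R) p :
  lap n gamma (fun x => \sum_j c j * h j x) p = \sum_j c j * lap n gamma (h j) p.
Proof.
rewrite /lap.
under eq_bigr => q _ do rewrite -sumrB mulr_sumr.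
under [RHS]eq_bigr => j _ do rewrite mulr_sumr.
rewrite exchange_big /=; apply: eq_bigr => q _; apply: eq_bigr => j _; ring.
Qed.

Hypothesis gpos : forall p q : pt d, edge n p q -> 0 < gamma p q.

Lemma maxprin (P : pred (pt d)) (v : pt d -> R) : (0 < d)%N ->
  (forall p, P p -> inD n p) ->
  (forall p, P p -> lap n gamma v p = 0) ->
  (forall p q, P p -> q \in nbrs n p -> ~~ P q -> v q = 0) ->
  forall p, P p -> v p <= 0.
Proof.
move=> d0 PD Hlap Hout p0 Pp0.
set s := [seq x <- Dseq | P x].
have ins x : (x \in s) = P x.
  rewrite mem_filter; case Px: (P x) => //=; rewrite mem_Dseq; exact: PD.
have sn : s != [::] by apply/eqP => E; move: (ins p0); rewrite E Pp0.
have [x1 x1s Hx1] := seq_argmax v sn.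
case: (lerP (v x1) 0) => [M0|Mpos]; first by apply: le_trans M0; apply: Hx1; rewrite ins.
set s' := [seq y <- s | v y == v x1].
have sn' : s' != [::].
  by apply/eqP => E; move: (mem_filter (fun y => v y == v x1) x1 s); rewrite -/s' E x1s eqxx.
have [x2 x2s Hx2] := seq_argmax (@ssum d) sn'.
move: x2s; rewrite mem_filter => /andP[/eqP vx2 x2s]; rewrite ins in x2s.
have Dx2 := PD _ x2s.
have le_nb q : q \in nbrs n x2 -> 0 <= - (gamma x2 q * (v q - v x2)).
  move=> qn; have [e _] := in_nbrs qn; have gp := gpos e.
  rewrite oppr_ge0 pmulr_rle0 // subr_le0 vx2.
  case Pq: (P q); first by apply: Hx1; rewrite ins.
  by rewrite (Hout x2 q) ?Pq // ltW.
have all0 : all (fun q => (q \in nbrs n x2) ==> (- (gamma x2 q * (v q - v x2)) == 0)) (nbrs n x2).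
  rewrite -psumr_eq0 //; rewrite -big_seq sumrN oppr_eq0; apply/eqP; exact: Hlap.
pose i0 : 'I_d := Ordinal d0.
have qn := nbrs_shift i0 true Dx2.
move/allP: all0 => /(_ _ qn); rewrite qn /= oppr_eq0 mulf_eq0 => /orP[/eqP g0|].
  by have := gpos (edge_shift i0 true Dx2); rewrite g0 ltxx.
rewrite subr_eq0 vx2 => /eqP vq.
have Pq : P (shift x2 i0 true).
  case Pq: (P _) => //; move: (Hout x2 _ x2s qn); rewrite Pq => /(_ isT).
  by rewrite vq => E; move: Mpos; rewrite E ltxx.
have : shift x2 i0 true \in s' by rewrite mem_filter vq eqxx ins.
move/Hx2; rewrite ssum_shift /=; lia.
Qed.

Lemma minprin (P : pred (pt d)) (v : pt d -> R) : (0 < d)%N ->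
  (forall p, P p -> inD n p) ->
  (forall p, P p -> lap n gamma v p = 0) ->
  (forall p q, P p -> q \in nbrs n p -> ~~ P q -> v q = 0) ->
  forall p, P p -> v p = 0.
Proof.
move=> d0 PD Hlap Hout p Pp; apply/eqP; rewrite eq_le (@maxprin P v) //=.
rewrite -oppr_le0; apply: (@maxprin P (fun x => - v x)) => //.
  by move=> q Pq; rewrite lapN Hlap ?oppr0.
by move=> q r Pq rn nPr; rewrite (Hout q r) ?oppr0.
Qed.


Lemma exists_sol (P : pred (pt d)) (s : seq (pt d)) (g : pt d -> R) :
  uniq s -> (forall p, (p \in s) = P p) ->
  (forall v, (forall p, P p -> lap n gamma v p = 0) ->
     (forall p, ~~ P p -> v p = 0) -> forall p, P p -> v p = 0) ->
  exists u, (forall p, P p -> lap n gamma u p = 0) /\ (forall p, ~~ P p -> u p = g p).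
Proof.
move=> us ins inj.
pose k := size s.
pose x0 : pt d := [ffun _ => 0%Z].
pose e (j : 'I_k) : pt d -> R := fun p => (p == nth x0 s j)%:R.
pose vec (x : 'rV[R]_k) : pt d -> R := fun p => \sum_j x 0 j * e j p.
pose A : 'M[R]_k := \matrix_(i, j) lap n gamma (e i) (nth x0 s j).
have vecA x j : (x *m A) 0 j = lap n gamma (vec x) (nth x0 s j).
  by rewrite mxE lap_sum; apply: eq_bigr => i _; rewrite mxE.
have vec_out x p : ~~ P p -> vec x p = 0.
  move=> nP; apply: big1 => j _; rewrite /e.
  have -> : (p == nth x0 s j) = false.
    apply/negbTE; apply: contra nP => /eqP ->; rewrite -ins mem_nth //.
  by rewrite mulr0.
have vec_nth x (i : 'I_k) : vec x (nth x0 s i) = x 0 i.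
  rewrite /vec (bigD1 i) //= /e eqxx mulr1 big1 ?addr0 // => j ji.
  by rewrite nth_uniq // eq_sym -[(_ == _)%N]/(j == i) (negbTE ji) mulr0.
have Ainj (x : 'rV[R]_k) : x *m A = 0 -> x = 0.
  move=> xA; apply/rowP => i; rewrite mxE -vec_nth.
  apply: (inj (vec x)); last by rewrite -ins mem_nth.
  - move=> p Pp; have : p \in s by rewrite ins.
    move/(nthP x0) => [j js <-].
    by rewrite -(vecA x (Ordinal js)) xA mxE.
  - exact: vec_out.
have Au : A \in unitmx.
  rewrite -row_free_unit -kermx_eq0; apply/eqP/row_matrixP => i.
  rewrite row0; apply: Ainj; by rewrite -row_mul mulmx_ker row0.
pose b : 'rV[R]_k := \row_j lap n gamma g (nth x0 s j).
pose x := - b *m invmx A.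
exists (fun p => g p + vec x p); split.
- move=> p Pp; rewrite lapD.
  have : p \in s by rewrite ins.
  move/(nthP x0) => [j js <-].
  by rewrite -(vecA x (Ordinal js)) /x mulmxKV // !mxE /= addrN.
- by move=> p nP; rewrite vec_out // addr0.
Qed.


Variable t : int.

Lemma notD_at (q : pt d) i s : inD n q -> ~~ inD n (shift q i s) ->
  ~~ (1 <= shift q i s i <= n%:Z).
Proof.
move=> Dq; rewrite /inD negb_forall => /existsP [j]; rewrite shiftE.
case: eqP => [->|ji]; first by rewrite shiftE eqxx.
by move/inDP: Dq => ->.
Qed.

Lemma notJ_up (p : pt d) i s : inD n p -> t + 2 <= ssum p ->
  ~~ inJ n t (shift p i s).
Proof.
move=> Dp hs; rewrite /inJ negb_and; apply/orP; right; rewrite negb_or ssum_shift.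
case: s hs => /= hs; apply/andP; split; rewrite negb_and; apply/orP; try (right; lia).
left; rewrite /max_is negb_and; apply/orP; left; rewrite negb_exists; apply/forallP => j.
rewrite shiftE; move/inDP: Dp => /(_ j) /andP[h1 h2].
by case: (j == i); apply/eqP; lia.
Qed.

Lemma up_qb (q : pt d) i s : inD n q -> inBD n (shift q i s) ->
  ~~ inJ n t (shift q i s) -> t + 1 <= ssum q.
Proof.
move=> Dq Bb nJ.
have nDb : ~~ inD n (shift q i s) by move: Bb; rewrite /inBD => /andP[].
have := notD_at Dq nDb; rewrite shiftE eqxx.
have hq := inDP _ Dq i; move/andP: hq => [h1 h2].
move: nJ; rewrite /inJ Bb /= negb_or ssum_shift => /andP[].
clear Bb nDb; case: s => /= nJ1 nJ2 hout.
- have qi : q i = n%:Z by lia.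
  have mx : max_is (shift q i true) (n%:Z + 1).
    apply/andP; split; first by apply/existsP; exists i; rewrite shiftE eqxx qi.
    apply/forallP => j; rewrite shiftE; move/inDP: Dq => /(_ j) /andP[g1 g2].
    by case: (j == i); lia.
  move: nJ2; rewrite mx /=; lia.
- have qi : q i = 1 by lia.
  have mn : min_is (shift q i false) 0.
    apply/andP; split; first by apply/existsP; exists i; rewrite shiftE eqxx qi.
    apply/forallP => j; rewrite shiftE; move/inDP: Dq => /(_ j) /andP[g1 g2].
    by case: (j == i); lia.
  move: nJ1; rewrite mn /=; lia.
Qed.


Lemma qb_facts (b : pt d) : inBD n b -> inD n (qb n b) /\ exists i s, b = shift (qb n b) i s.
Proof.
move=> Bb.
have [i [s Ds]] : exists i s, inD n (shift b i s).
  by move: Bb => /andP[_ /existsP[i /existsP[s h]]]; exists i, s.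
have nB : inBD n (shift b i s) = false by rewrite /inBD Ds.
have e : edge n b (shift b i s).
  by rewrite /edge /inDbar Bb orbT Ds nB andbF /= l1_shift.
have mem : shift b i s \in [seq q <- nbrs n b | inD n q].
  by rewrite mem_filter Ds nbrs_shift'.
rewrite /qb; case E: [seq q <- nbrs n b | inD n q] mem => [//|x r] _ /=.
have : x \in [seq q <- nbrs n b | inD n q] by rewrite E mem_head.
rewrite mem_filter => /andP[Dx xn]; split => //.
have [_ [j [s' Ex]]] := in_nbrs xn.
by exists j, (~~ s'); rewrite Ex shiftK.
Qed.

Lemma S_exists (phi : pt d -> R) : (0 < d)%N -> exists u, S_spec n gamma phi u.
Proof.
move=> d0.
have [u [H1 H2]] := @exists_sol (inD n) Dseq (fun p => if inBD n p then phi p else 0)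
  Dseq_uniq mem_Dseq
  (fun v Hl Ho => @minprin (inD n) v d0 (fun p h => h) Hl (fun p q _ _ h => Ho q h)).
exists u; split.
- exact: H1.
- move=> b Bb; rewrite H2 ?Bb //; by move: Bb => /andP[].
- move=> p; rewrite /inDbar negb_or => /andP[nD nB]; by rewrite H2 // (negbTE nB).
Qed.

Lemma T2_exists (y : pt d -> R) : (0 < d)%N -> exists w, T2_spec n gamma t y w.
Proof.
move=> d0.
pose P := fun p : pt d => inD n p && (t + 1 < ssum p).
have PD : forall p : pt d, P p -> inD n p by move=> p /andP[].
have [w [H1 H2]] := @exists_sol P [seq p <- Dseq | P p]
  (fun p => if inL1 n t p then y p else 0)
  (filter_uniq _ Dseq_uniq)
  (fun p => ltac:(rewrite mem_filter mem_Dseq; case: (boolP (P p)) => // /PD ->; done))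
  (fun v Hl Ho => @minprin P v d0 PD Hl (fun p q _ _ h => Ho q h)).
exists w; split.
- move=> p L; rewrite H2 ?L //; move: L; rewrite /inL1 /P => /andP[_ /eqP ->].
  by rewrite ltxx andbF.
- move=> b /andP[Bb _].
  have nD : inD n b = false by move: Bb => /andP[/negbTE].
  by rewrite H2 /inL1 /P nD.
- by move=> p Dp hp; apply: H1; rewrite /P Dp.
- move=> p; rewrite /inUp negb_or => /andP[h _].
  have nP : ~~ P p.
    apply: contra h; rewrite /P => /andP[-> h2] /=; lia.
  rewrite H2 //; case L: (inL1 n t p) => //; move: L h; rewrite /inL1 => /andP[-> /eqP ->].
  rewrite /=; lia.
Qed.


Lemma main_eq (phi : pt d -> R) (b : pt d) : (0 < d)%N ->
  Top n gamma t phi b = T2 n gamma t (T1 n gamma t phi) b.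
Proof.
move=> d0.
rewrite /Top /T2 {1 3}/restr.
case Jb: (inBDJc n t b) => //.
have Bb : inBD n b by move: Jb => /andP[].
have nJb : ~~ inJ n t b by move: Jb => /andP[].
have E : restr (inBD n) (restr (inJ n t) phi) = restr (inJ n t) phi.
  apply: functional_extensionality => p; rewrite /restr.
  by case: (boolP (inJ n t p)) => [/andP[->]|_]; case: (inBD n p).
rewrite /Lam /restr Bb -/(restr (inJ n t) phi) -/(restr (inBD n) _) E.
set u := Sgam n gamma (restr (inJ n t) phi).
set w := ClassicalEpsilon.epsilon _ _.
have [Su1 Su2 Su3] : S_spec n gamma (restr (inJ n t) phi) u.
  exact: ClassicalEpsilon.epsilon_spec (S_exists _ d0).
have [Sw1 Sw2 Sw3 Sw4] : T2_spec n gamma t (restr (inL1 n t) (T1 n gamma t phi)) w.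
  exact: ClassicalEpsilon.epsilon_spec (T2_exists _ d0).
have agL1 p : inL1 n t p -> u p = w p.
  by move=> L; rewrite Sw1 // /restr L /T1 /restr L.
have agB q : inBDJc n t q -> u q = w q.
  move=> Jq; rewrite Sw2 //; move/andP: Jq => [Bq nJq].
  by rewrite Su2 // /restr (negbTE nJq).
pose P := fun p : pt d => inD n p && (t + 1 < ssum p).
have agree p : inD n p -> t + 1 <= ssum p -> u p = w p.
  move=> Dp hp; case: (altP (ssum p =P t + 1)) => hs.
    by apply: agL1; rewrite /inL1 Dp hs eqxx.
  have Pp : P p by rewrite /P Dp /=; lia.
  apply/eqP; rewrite -subr_eq0; apply/eqP.
  apply: (@minprin P (fun x => u x - w x) d0 _ _ _ p Pp).
  - by move=> x /andP[].
  - by move=> q /andP[Dq hq]; rewrite lapB Su1 // Sw3 // subrr.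
  - move=> q r /andP[Dq hq] rn nPr; apply/eqP; rewrite subr_eq0; apply/eqP.
    have [_ [i [s Er]]] := in_nbrs rn; subst r.
    case Dr: (inD n (shift q i s)).
      apply: agL1; rewrite /inL1 Dr /=; move: nPr; rewrite /P Dr ssum_shift /=.
      by clear rn; case: s {Dr} => /=; lia.
    apply: agB; rewrite /inBDJc inBD_shift ?Dr //= notJ_up //; lia.
rewrite /Dgam.
have [Dq [i [s Eb]]] := qb_facts Bb.
have hq : t + 1 <= ssum (qb n b).
  apply: (@up_qb _ i s Dq); by rewrite -Eb.
by rewrite agree // agB.
Qed.

End S.

Theorem proposition2p1 (R : realFieldType) (d n : nat)
  (gamma : pt d -> pt d -> R) (t : int) :
  (2 <= d)%N -> (1 <= n)%N ->
  (forall p q : pt d, edge n p q -> 0 < gamma p q) ->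
  (forall p q : pt d, edge n p q -> gamma p q = gamma q p) ->
  (d%:Z - 1 <= t) -> (t <= (d * n)%:Z - 1) ->
  Top n gamma t = (fun phi => T2 n gamma t (T1 n gamma t phi)).
Proof.
move=> d2 _ gpos _ _ _.
apply: functional_extensionality => phi; apply: functional_extensionality => b.
apply: main_eq => //; exact: leq_trans d2.
Qed.
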